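(* Let $n\ge 2$, and let $S$ be a semitransitive subsemigroup of $\mathcal{I}_n\setminus\mathcal{S}_n$ with $|S|\le 2n$, with non-zero idempotents $g,h$ and transitivity blocks $X_1,\dots,X_m$. Let $t=\min_{1\le i\le m}|X_i|$ and $N=(gSh\cup hSg)\setminus\{0\}$. Then $|N|\ge n-t$.
   Context: $\mathcal{I}_n$ denotes the symmetric inverse semigroup of all partial injective maps of $X=\{1,\dots,n\}$ to itself, with maps written on the right and composed left to right; $0$ denotes the empty map. $\mathcal{S}_n$ is the symmetric group on $X$. A semigroup $S$ of partial transformations of $X$ is semitransitive if for all $x,y\in X$ there is $\varphi\in S$ with $x\varphi=y$ or $y\varphi=x$. It is known that such an $S$ (semitransitive in $\mathcal{I}_n\setminus\mathcal{S}_n$, $|S|\le 2n$) has exactly two non-zero idempotents $g,h$, with disjoint domains whose union is $X$. For $x,y\in X$ write $x\ge y$ if $x\varphi=y$ for some $\varphi\in S$; this is a total preorder, and its equivalence classes are the transitivity blocks $X_1,\dots,X_m$, numbered so that for $x\in X_i$, $y\in X_j$ one has $x\ge y$ iff $i\le j$. $gSh=\{g\sigma h:\sigma\in S\}$, and similarly $hSg$. *)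

(* Defs.v *)
From mathcomp Require Import all_boot.
Set Implicit Arguments. Unset Strict Implicit. Unset Printing Implicit Defensive.

(* Partial transformations of X = 'I_n (standing for {1,...,n}):
   f x = Some y means x f = y; f x = None means x is not in dom f. *)
Definition ptrans (n : nat) := {ffun 'I_n -> option 'I_n}.

Definition pinjb n (f : ptrans n) : bool :=
  [forall x, forall y, (f x != None) && (f x == f y) ==> (x == y)].

(* composition, maps written on the right: x (f;g) = (x f) g *)
Definition pcomp n (f g : ptrans n) : ptrans n := [ffun x => obind g (f x)].

Definition pzero n : ptrans n := [ffun => None].

Definition is_permb n (f : ptrans n) : bool := pinjb f && [forall x, f x != None].

Definition idempotentb n (f : ptrans n) : bool := pcomp f f == f.

Definition subsemigroup_In_minus_Sn n (S : {set ptrans n}) : Prop :=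
  (forall f, f \in S -> pinjb f && ~~ is_permb f) /\
  (forall f g, f \in S -> g \in S -> pcomp f g \in S).

Definition semitransitive n (S : {set ptrans n}) : Prop :=
  forall x y : 'I_n, exists2 f, f \in S & (f x = Some y \/ f y = Some x).

Definition reachb n (S : {set ptrans n}) (x y : 'I_n) : bool :=
  [exists f in S, f x == Some y].

Definition tblock n (S : {set ptrans n}) (x : 'I_n) : {set 'I_n} :=
  [set y | reachb S x y && reachb S y x].

Definition sandwich n (S : {set ptrans n}) (a b : ptrans n) : {set ptrans n} :=
  [set pcomp (pcomp a s) b | s in S].

(* Main.v *)
Require Import Defs.
From mathcomp Require Import all_boot.
From Stdlib Require Import Lia.
Set Implicit Arguments. Unset Strict Implicit. Unset Printing Implicit Defensive.


Notation pcm := Defs.pcomp.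

Section Basics.
Variable n : nat.
Implicit Types (f k l : ptrans n) (x y z : 'I_n).

Lemma pcompE f k x : pcm f k x = obind k (f x).
Proof. by rewrite /Defs.pcomp ffunE. Qed.

Lemma pcompA f k l : pcm f (pcm k l) = pcm (pcm f k) l.
Proof. by apply/ffunP=> x; rewrite !pcompE; case: (f x) => //= y; rewrite pcompE. Qed.

Definition pinj f := forall x y z, f x = Some z -> f y = Some z -> x = y.

Lemma pinjP f : reflect (pinj f) (pinjb f).
Proof.
apply: (iffP forallP) => H.
  move=> x y z fx fy; have /forallP/(_ y) := H x.
  by rewrite fx fy eqxx /= => /eqP.
move=> x; apply/forallP=> y; apply/implyP=> /andP[].
case E: (f x) => [z|] // _ /eqP E2; apply/eqP; exact: H E (esym E2).
Qed.

Lemma pinj_comp f k : pinj f -> pinj k -> pinj (pcm f k).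
Proof.
move=> If Ik x y z; rewrite !pcompE.
case Ex: (f x) => [a|] //= Ka; case Ey: (f y) => [b|] //= Kb.
by have ab := Ik _ _ _ Ka Kb; subst b; exact: If Ex Ey.
Qed.

Definition ppow f m := iter m (pcm f) f.

Lemma ppowS f m : ppow f m.+1 = pcm f (ppow f m). Proof. by []. Qed.

Lemma ppowD f a b : pcm (ppow f a) (ppow f b) = ppow f (a + b).+1.
Proof. by elim: a => [|a IH] //; rewrite ppowS -pcompA IH. Qed.

Lemma ppow_period f i j : i < j -> ppow f i = ppow f j ->
  exists m, pcm (ppow f m) (ppow f m) = ppow f m.
Proof.
move=> lij E.
have sh d : ppow f (i + d) = ppow f (j + d).
  by elim: d => [|d IH]; rewrite ?addn0 // !addnS !ppowS IH.
set p := j - i.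
have jE : j = i + p by rewrite /p subnKC // ltnW.
have per q d : ppow f (i + d + p * q) = ppow f (i + d).
  elim: q => [|q IH]; first by rewrite muln0 addn0.
  have -> : i + d + p * q.+1 = j + (d + p * q).
    by rewrite jE mulnS -!plusE -!multE; lia.
  by rewrite -sh addnA IH.
have p0 : 0 < p by rewrite subn_gt0.
set M := p * i.+1.
have iM : i < M by rewrite /M leq_pmull.
exists M.-1.
have mE : M.-1 = i + (M.-1 - i) by rewrite subnKC // -ltnS prednK // (leq_ltn_trans _ iM).
rewrite ppowD.
have -> : (M.-1 + M.-1).+1 = i + (M.-1 - i) + M.
  by rewrite -mE -addnS prednK // (leq_ltn_trans _ iM).
by rewrite per -mE.
Qed.

Lemma ppow_idem f : exists m, pcm (ppow f m) (ppow f m) = ppow f m.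
Proof.
pose F (i : 'I_(#|{: ptrans n}|.+1)) := ppow f i.
have [i [j [nij Eij]]] : exists i j, i != j /\ F i = F j.
  case: (boolP [exists i, exists j, (i != j) && (F i == F j)]).
    by move=> /existsP[i /existsP[j /andP[a /eqP b]]]; exists i, j.
  move=> /negP Hn; exfalso.
  have inj : injective F.
    move=> i j E; apply/eqP; apply/negPn/negP => nij; apply: Hn.
    by apply/existsP; exists i; apply/existsP; exists j; rewrite nij E eqxx.
  by have := leq_card F inj; rewrite card_ord ltnn.
case: (ltngtP i j) => [lt|gt|/val_inj eq]; last by rewrite eq eqxx in nij.
  exact: ppow_period lt Eij.
exact: ppow_period gt (esym Eij).
Qed.

Definition restrict (W : {set 'I_n}) f : ptrans n :=
  [ffun x => if x \in W then
     (if f x is Some y then (if y \in W then Some y else None) else None) else None].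

Lemma restrictE (W : {set 'I_n}) f x : restrict W f x =
  if x \in W then (if f x is Some y then (if y \in W then Some y else None) else None)
  else None.
Proof. by rewrite ffunE. Qed.

Lemma restrictS (W : {set 'I_n}) f x y : restrict W f x = Some y -> [/\ x \in W, y \in W & f x = Some y].
Proof.
rewrite restrictE; case: (x \in W) => //; case: (f x) => [z|] //.
by case: ifP => // zW [<-].
Qed.

Lemma restrict_sub (W W' : {set 'I_n}) f : W' \subset W -> restrict W' (restrict W f) = restrict W' f.
Proof.
move=> sub; apply/ffunP => x; rewrite !restrictE.
case xW': (x \in W') => //; rewrite (subsetP sub _ xW').
case: (f x) => [y|] //; case yW': (y \in W'); first by rewrite (subsetP sub _ yW') yW'.
by case: (y \in W); rewrite ?yW'.
Qed.

Lemma restrict0 (W : {set 'I_n}) : restrict W (pzero n) = pzero n.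
Proof. by apply/ffunP => x; rewrite restrictE !ffunE; case: (x \in W). Qed.

End Basics.


Set Default Proof Using "All".
Section Main.
Variables (n : nat) (S : {set ptrans n}) (g h : ptrans n).
Hypothesis Sinj : forall f, f \in S -> pinj f.
Hypothesis Scl : forall f k, f \in S -> k \in S -> pcm f k \in S.
Hypothesis gS : g \in S.
Hypothesis hS : h \in S.
Hypothesis gid : forall x y, g x = Some y -> y = x.
Hypothesis hid : forall x y, h x = Some y -> y = x.
Hypothesis ghpart : forall x, (g x == None) = (h x != None).
Hypothesis idem_gh : forall f, f \in S -> pcm f f = f -> f != pzero n -> f = g \/ f = h.
Hypothesis Sst : semitransitive S.

Implicit Types (f k l : ptrans n) (x y z a b c p q : 'I_n).
Implicit Types (W V : {set 'I_n}).
Local Notation "W '" := W (only parsing).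

Definition side x := g x != None.
Definition e_of x := if side x then g else h.

Lemma gP x : g x = if side x then Some x else None.
Proof. by rewrite /side; case E: (g x) => [y|] //=; rewrite (gid E). Qed.

Lemma hP x : h x = if side x then None else Some x.
Proof.
have := ghpart x; rewrite /side; case E: (h x) => [y|]; case: (g x) => //=.
by rewrite (hid E).
Qed.

Lemma eP x y : e_of x y = if side y == side x then Some y else None.
Proof. by rewrite /e_of; case: (side x); rewrite ?gP ?hP; case: (side y). Qed.

Lemma e_in x : e_of x \in S.
Proof. by rewrite /e_of; case: (side x). Qed.

Lemma ppow_in f m : f \in S -> ppow f m \in S.
Proof. by move=> fS; elim: m => [|m IH] //=; exact: Scl. Qed.

Lemma reachP x y : reflect (exists2 f, f \in S & f x = Some y) (reachb S x y).
Proof.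
apply: (iffP existsP) => [[f /andP[fS /eqP E]]|[f fS E]]; first by exists f.
by exists f; rewrite fS E eqxx.
Qed.

Lemma reach_refl x : reachb S x x.
Proof. by apply/reachP; have [f fS [E|E]] := Sst x x; exists f. Qed.

Lemma reach_trans x y z : reachb S x y -> reachb S y z -> reachb S x z.
Proof.
move=> /reachP[f fS E1] /reachP[k kS E2]; apply/reachP; exists (pcm f k).
  exact: Scl.
by rewrite pcompE E1.
Qed.

Lemma reach_total x y : reachb S x y || reachb S y x.
Proof.
have [f fS [E|E]] := Sst x y; apply/orP; [left|right]; apply/reachP; by exists f.
Qed.

Lemma fix_idem f x : f \in S -> f x = Some x -> exists m, ppow f m = e_of x.
Proof.
move=> fS fx; have [m Em] := ppow_idem f; exists m.
have pin := ppow_in m fS.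
have px : ppow f m x = Some x.
  by elim: m {Em pin} => [|m IH] //=; rewrite pcompE fx.
have nz : ppow f m != pzero n.
  by apply/negP => /eqP E; move: px; rewrite E ffunE.
case: (idem_gh pin Em nz) => E; rewrite E in px *; rewrite /e_of.
  by have := gP x; rewrite px; case: (side x).
by have := hP x; rewrite px; case: (side x).
Qed.

Lemma dich s a c y : s \in S -> s a = Some c -> reachb S c a -> side y = side a ->
  exists2 z, s y = Some z & reachb S z y.
Proof.
move=> sS sa /reachP[t tS tc] sy.
set r := pcm s t.
have rS : r \in S by exact: Scl.
have ra : r a = Some a by rewrite /r pcompE sa /= tc.
have [m Em] := fix_idem rS ra.
have ey : ppow r m y = Some y by rewrite Em eP sy eqxx.
have [u uS uE] : exists2 u, u \in S & ppow r m = pcm s u.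
  case: m {Em ey} => [|m]; first by exists t.
  exists (pcm t (ppow r m)); first by apply: Scl => //; exact: ppow_in.
  by rewrite ppowS pcompA.
move: ey; rewrite uE pcompE; case E: (s y) => [z|] //= uz.
by exists z => //; apply/reachP; exists u.
Qed.

Lemma lower s x b a c : s \in S -> s x = Some b -> ~~ reachb S b x ->
  side a = side x -> s a = Some c -> ~~ reachb S c a.
Proof.
move=> sS sx nbx sa scE; apply/negP => rca.
have [z] := dich sS scE rca (esym sa); rewrite sx => -[<-].
by rewrite (negbTE nbx).
Qed.

Definition convex (W : {set 'I_n}) :=
  forall a b c, a \in W -> c \in W -> reachb S a b -> reachb S b c -> b \in W.

Definition sbelow x a := reachb S x a && ~~ reachb S a x.

Definition rank x := #|[set y | reachb S x y]|.

Lemma rank_lt x y : reachb S x y -> ~~ reachb S y x -> rank y < rank x.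
Proof.
move=> rxy nyx; apply: proper_card; apply/properP; split.
  by apply/subsetP=> z; rewrite !inE => ryz; exact: reach_trans rxy ryz.
by exists x; rewrite !inE ?reach_refl // (negbTE nyx).
Qed.

Definition bos (W : {set 'I_n}) p :=
  p \in W /\ forall q, q \in W -> side q = side p -> reachb S p q -> reachb S q p.

Lemma exists_bos (W : {set 'I_n}) (C : bool) q0 : q0 \in W -> side q0 = C ->
  exists p, bos W p /\ side p = C.
Proof.
move=> q0W sq0.
have P0 : (q0 \in W) && (side q0 == C) by rewrite q0W sq0 eqxx.
case: (@arg_minnP _ q0 (fun q => (q \in W) && (side q == C)) rank P0) => p /andP[pW /eqP spC] pmin.
exists p; split; last exact: spC.
split; first exact: pW.
move=> q qW sq rpq.
case: (boolP (reachb S q p)) => // nqp.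
have := pmin q; rewrite qW sq spC eqxx => /(_ isT).
by rewrite leqNgt (rank_lt rpq nqp).
Qed.

Lemma sbelow_trans x b a : sbelow x b -> reachb S b a -> sbelow x a.
Proof.
move=> /andP[rxb nbx] rba; rewrite /sbelow (reach_trans rxb rba) /=.
by apply/negP => rax; rewrite (reach_trans rba rax) in nbx.
Qed.

Lemma LK_aux (W : {set 'I_n}) p m : convex W -> bos W p ->
  forall x, #|[set a in W | sbelow x a]| < m -> x \in W -> reachb S x p ->
  exists2 s, s \in S & s x = Some p /\
    (forall a c, a \in W -> sbelow x a -> s a = Some c -> c \notin W).
Proof.
move=> cvx [pW pbos]; elim: m => [|m IH] x //; rewrite ltnS => Tm xW rxp.
case: (boolP (reachb S p x)) => [rpx | npx].
  have [t tS tx] := reachP _ _ rxp.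
  exists (pcm (pcm (e_of x) t) (e_of p)).
    by apply: Scl; [apply: Scl => //; exact: e_in | exact: e_in].
  split.
    by rewrite !pcompE eP eqxx /= tx /= eP eqxx.
  move=> a c aW /andP[rxa nax]; rewrite !pcompE eP.
  case: eqP => //= sa; case ta: (t a) => [c'|] //=; rewrite eP.
  case: eqP => //= sc' [<-]; apply/negP => c'W.
  have rac' : reachb S a c' by apply/reachP; exists t.
  have rpc' : reachb S p c' := reach_trans (reach_trans rpx rxa) rac'.
  have rc'p := pbos _ c'W sc' rpc'.
  by rewrite (reach_trans rac' (reach_trans rc'p rpx)) in nax.
set T := [set a in W | sbelow x a].
have pT : (p \in W) && sbelow x p by rewrite pW /sbelow rxp npx.
case: (@arg_maxnP _ p (fun a => (a \in W) && sbelow x a) rank pT) => b /andP[bW sxb] bmax.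
have bmaxr a : a \in W -> sbelow x a -> reachb S b a.
  move=> aW sxa; case/orP: (reach_total b a) => // rab.
  case: (boolP (reachb S b a)) => // nba; have := bmax a; rewrite aW sxa => /(_ isT).
  move=> H; have := leq_ltn_trans H (rank_lt rab nba); by rewrite ltnn.
have Tb : #|[set a in W | sbelow b a]| < m.
  apply: leq_trans Tm; apply: proper_card; apply/properP; split.
    apply/subsetP => a; rewrite !inE => /andP[aW sba]; rewrite aW /=.
    case/andP: sxb => rxb nbx; case/andP: sba => rba nab.
    rewrite /sbelow (reach_trans rxb rba) /=.
    by apply/negP => rax; rewrite (reach_trans rax rxb) in nab.
  exists b; rewrite !inE; first by apply/andP; split.
  by apply/negP => /andP[_ /andP[_ /negP]]; apply; exact: reach_refl.
have [sb sbS [sbb sbk]] := IH b Tb bW (bmaxr p pW (andP pT).2).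
have [k kS kx] := reachP _ _ (andP sxb).1.
exists (pcm (pcm (e_of x) k) sb).
  by apply: Scl => //; apply: Scl => //; exact: e_in.
split; first by rewrite !pcompE eP eqxx /= kx /= sbb.
move=> a c' aW sxa; rewrite !pcompE eP; case: eqP => //= sa.
case ka: (k a) => [c|] //= sbc; apply/negP => c'W.
have nca : ~~ reachb S c a := lower kS kx (andP sxb).2 sa ka.
have rba := bmaxr a aW sxa.
have rac : reachb S a c by apply/reachP; exists k.
have sbc' : sbelow b c.
  rewrite /sbelow (reach_trans rba rac) /=; apply/negP => rcb.
  by rewrite (reach_trans rcb rba) in nca.
have cW : c \in W.
  by apply: (cvx a c c') => //; apply/reachP; exists sb.
by have := sbk c c' cW sbc' sbc; rewrite c'W.
Qed.

Lemma LK (W : {set 'I_n}) x p : convex W -> bos W p -> x \in W -> reachb S x p ->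
  exists2 s, s \in S & s x = Some p /\
    (forall a c, a \in W -> sbelow x a -> s a = Some c -> c \notin W).
Proof. by move=> cvx bp; apply: (LK_aux (m := #|[set a in W | sbelow x a]|.+1)). Qed.

Definition N0 := sandwich S g h :|: sandwich S h g.
Definition Nset (W : {set 'I_n}) := [set restrict W f | f in N0] :\ pzero n.

Lemma N0_dir f : f \in N0 -> exists C, forall a b, f a = Some b -> side a = C /\ side b = ~~ C.
Proof.
rewrite inE => /orP[] /imsetP[s sS ->]; [exists true | exists false];
  move=> a b; rewrite !pcompE ?gP ?hP; case: (side a) => //= ;
  case: (s a) => [c|] //=; rewrite ?gP ?hP; case: ifP => // sc [<-]; by rewrite sc.
Qed.

Lemma N0_inj f : f \in N0 -> pinj f.
Proof.
rewrite inE => /orP[] /imsetP[s sS ->];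
 by apply: pinj_comp; [apply: pinj_comp|]; apply: Sinj.
Qed.

Lemma Nset_dir W mu : mu \in Nset W ->
  exists C, forall a b, mu a = Some b -> side a = C /\ side b = ~~ C.
Proof.
rewrite !inE => /andP[_ /imsetP[f fN ->]]; have [C HC] := N0_dir fN.
by exists C => a b /restrictS[_ _ /HC].
Qed.

Lemma Nset_inj W mu : mu \in Nset W -> pinj mu.
Proof.
rewrite !inE => /andP[_ /imsetP[f fN ->]] x y z /restrictS[_ _ E1] /restrictS[_ _ E2].
exact: N0_inj E1 E2.
Qed.

Lemma gain W (W' : {set 'I_n}) (F : {set ptrans n}) : W' \subset W -> F \subset Nset W ->
  (forall mu, mu \in F -> restrict W' mu = pzero n) -> #|Nset W'| + #|F| <= #|Nset W|.
Proof.
move=> sWW' sF F0.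
have sub : Nset W' \subset [set restrict W' mu | mu in Nset W :\: F].
  apply/subsetP => nu; rewrite !inE => /andP[nz /imsetP[f fN Enu]]; subst nu.
  apply/imsetP; exists (restrict W f); last by rewrite restrict_sub.
  rewrite !inE; apply/and3P; split.
  - apply/negP => /F0; rewrite restrict_sub // => E; by move: nz; rewrite E eqxx.
  - apply/negP => /eqP E; move: nz; by rewrite -(restrict_sub f sWW') E restrict0 eqxx.
  - exact: imset_f.
have := leq_trans (subset_leq_card sub) (leq_imset_card _ _).
rewrite cardsD (setIidPr sF) addnC -leq_subRL //.
exact: subset_leq_card.
Qed.

Lemma card_fix_target (X : {set 'I_n}) (F : {set ptrans n}) p :
  (forall mu, mu \in F -> pinj mu) ->
  (forall x, x \in X -> exists2 mu, mu \in F & mu x = Some p) -> #|X| <= #|F|.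
Proof.
move=> Finj HX; pose phi (mu : ptrans n) := odflt p [pick y | mu y == Some p].
have sub : X \subset [set phi mu | mu in F].
  apply/subsetP => x xX; have [mu muF mux] := HX x xX.
  apply/imsetP; exists mu => //; rewrite /phi.
  case: pickP => [y /eqP muy|]; last by move/(_ x); rewrite mux eqxx.
  by rewrite /= (Finj mu muF _ _ _ muy mux).
exact: leq_trans (subset_leq_card sub) (leq_imset_card _ _).
Qed.

Lemma card_fix_source (P : {set 'I_n}) (F : {set ptrans n}) x :
  (forall p, p \in P -> exists2 mu, mu \in F & mu x = Some p) -> #|P| <= #|F|.
Proof.
move=> HP; pose phi (mu : ptrans n) := odflt x (mu x).
have sub : P \subset [set phi mu | mu in F].
  by apply/subsetP => p pP; have [mu muF mux] := HP p pP; apply/imsetP; exists mu; rewrite // /phi mux.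
exact: leq_trans (subset_leq_card sub) (leq_imset_card _ _).
Qed.

Definition top (W : {set 'I_n}) := [set x in W | [forall y in W, reachb S x y]].

Lemma topW W x : x \in top W -> x \in W.
Proof. by rewrite inE => /andP[]. Qed.

Lemma top_reach W x y : x \in top W -> y \in W -> reachb S x y.
Proof. by rewrite inE => /andP[_ /forallP/(_ y)/implyP]; apply. Qed.

Lemma top_sbelow W x a : x \in top W -> a \in W -> a \notin top W -> sbelow x a.
Proof.
move=> xt aW nat; rewrite /sbelow (top_reach xt aW) /=; apply/negP => rax.
move/negP: nat; apply; rewrite inE aW; apply/forallP => y; apply/implyP => yW.
exact: reach_trans rax (top_reach xt yW).
Qed.

Definition F0 W := [set mu in Nset W | restrict (W :\: top W) mu == pzero n].

Lemma F0_sub W : F0 W \subset Nset W.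
Proof. by apply/subsetP => mu; rewrite inE => /andP[]. Qed.

Lemma F0_res W mu : mu \in F0 W -> restrict (W :\: top W) mu = pzero n.
Proof. by rewrite inE => /andP[_ /eqP]. Qed.

Lemma F0_inj W mu : mu \in F0 W -> pinj mu.
Proof. by move/(subsetP (F0_sub W)); exact: Nset_inj. Qed.

Lemma LKF W x p : convex W -> x \in top W -> bos W p -> side p != side x ->
  exists2 mu, mu \in F0 W & mu x = Some p.
Proof.
move=> cvx xt bp spx; have xW := topW xt; have [pW _] := bp.
have [s sS [sx sk]] := LK cvx bp xW (top_reach xt pW).
set nu := pcm (pcm (e_of x) s) (e_of p).
have nuN : nu \in N0.
  rewrite inE /nu /e_of; move: spx; case: (side x); case: (side p) => // _.
    by apply/orP; left; apply/imsetP; exists s.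
  by apply/orP; right; apply/imsetP; exists s.
have nux : nu x = Some p by rewrite /nu !pcompE eP eqxx /= sx /= eP eqxx.
exists (restrict W nu); last by rewrite restrictE xW nux pW.
rewrite !inE; apply/andP; split.
  apply/andP; split; last exact: imset_f.
  by apply/negP => /eqP E; have := congr1 (fun f : ptrans n => f x) E; rewrite restrictE xW nux pW ffunE.
apply/eqP; rewrite restrict_sub ?subsetDl //; apply/ffunP => a; rewrite restrictE [pzero n a]ffunE.
case: (boolP (a \in W :\: top W)) => // aW'; move: (aW'); rewrite in_setD => /andP[nta aW].
rewrite /nu !pcompE eP; case: eqP => //= _; case sa: (s a) => [c|] //=; rewrite eP.
case: eqP => //= _; have := sk a c aW (top_sbelow xt aW nta) sa.
by rewrite in_setD => /negbTE->; rewrite andbF.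
Qed.

Lemma G1 W : convex W -> (exists2 a, a \in W & side a) -> (exists2 b, b \in W & ~~ side b) ->
  #|Nset (W :\: top W)| + #|top W| <= #|Nset W|.
Proof.
move=> cvx [a aW sa] [b bW sb].
have [p1 [bp1 sp1]] := exists_bos (C := false) bW (negbTE sb).
have [p2 [bp2 sp2]] := exists_bos (C := true) aW sa.
apply: (leq_trans _ (gain (subsetDl W (top W)) (F0_sub W) (@F0_res W))).
  rewrite leq_add2l.
  set F1 := [set mu in F0 W | [exists y, side y && (mu y != None)]].
  rewrite -(cardsID [set x | side x] (top W)) -(cardsID F1 (F0 W)).
  apply: leq_add.
    apply: (card_fix_target (p := p1)).
      by move=> mu; rewrite inE => /andP[/F0_inj].
    move=> x /setIP[xt]; rewrite inE => sx.
    have sd : side p1 != side x by rewrite sp1 sx.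
    have [mu muF mux] := LKF cvx xt bp1 sd.
    exists mu => //; apply/setIP; split => //; rewrite inE muF /=; apply/existsP; exists x; by rewrite sx mux.
  apply: (card_fix_target (p := p2)).
    by move=> mu; rewrite in_setD => /andP[_ /F0_inj].
  move=> x /setDP[xt]; rewrite inE => sx.
  have sd : side p2 != side x by rewrite sp2; case: (side x) sx.
  have [mu muF mux] := LKF cvx xt bp2 sd.
  exists mu => //; apply/setDP; split => //; rewrite inE muF /=; apply/negP => /existsP[y /andP[sy /eqP]].
  case E: (mu y) => [z|] // _.
  have [C HC] := Nset_dir (subsetP (F0_sub W) _ muF).
  have [Cy _] := HC _ _ E; have [Cx _] := HC _ _ mux.
  by move: sx; rewrite Cx -Cy sy.
Qed.

Lemma G1r W x (P : {set 'I_n}) : convex W -> x \in top W ->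
  (forall p, p \in P -> bos W p /\ side p != side x) ->
  #|Nset (W :\: top W)| + #|P| <= #|Nset W|.
Proof.
move=> cvx xt HP; apply: (leq_trans _ (gain (subsetDl W (top W)) (F0_sub W) (@F0_res W))).
rewrite leq_add2l; apply: (card_fix_source (x := x)) => p pP.
by have [bp sp] := HP p pP; exact: LKF.
Qed.

Lemma G1t W p (X : {set 'I_n}) : convex W -> bos W p -> X \subset top W ->
  (forall x, x \in X -> side x != side p) ->
  #|Nset (W :\: top W)| + #|X| <= #|Nset W|.
Proof.
move=> cvx bp sX HX; apply: (leq_trans _ (gain (subsetDl W (top W)) (F0_sub W) (@F0_res W))).
rewrite leq_add2l; apply: (card_fix_target (p := p)); first exact: F0_inj.
move=> x xX; apply: LKF => //; first exact: (subsetP sX).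
by rewrite eq_sym; exact: HX.
Qed.

Definition bot W := [set z in W | [forall y in W, reachb S y z]].

Lemma botW W z : z \in bot W -> z \in W.
Proof. by rewrite inE => /andP[]. Qed.

Lemma bot_reach W y z : z \in bot W -> y \in W -> reachb S y z.
Proof. by rewrite inE => /andP[_ /forallP/(_ y)/implyP]; apply. Qed.

Lemma top_ex W x : x \in W -> exists y, y \in top W.
Proof.
move=> xW; have P0 : x \in W by [].
case: (@arg_maxnP _ x (fun a => a \in W) rank P0) => m mW mmax.
exists m; rewrite inE mW; apply/forallP => y; apply/implyP => yW.
case/orP: (reach_total m y) => // rym; case: (boolP (reachb S m y)) => // nmy.
by have := leq_ltn_trans (mmax y yW) (rank_lt rym nmy); rewrite ltnn.
Qed.

Lemma bot_ex W x : x \in W -> exists y, y \in bot W.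
Proof.
move=> xW; have P0 : x \in W by [].
case: (@arg_minnP _ x (fun a => a \in W) rank P0) => m mW mmin.
exists m; rewrite inE mW; apply/forallP => y; apply/implyP => yW.
case/orP: (reach_total m y) => // rmy; case: (boolP (reachb S y m)) => // nym.
by have := leq_ltn_trans (mmin y yW) (rank_lt rmy nym); rewrite ltnn.
Qed.

Lemma bos_bot W p : p \in bot W -> bos W p.
Proof. by move=> pb; split=> [|q qW _ _]; [exact: botW pb | exact: bot_reach pb qW]. Qed.

Lemma convex_top W : convex W -> convex (W :\: top W).
Proof.
move=> cvx a b c /setDP[aW nat] /setDP[cW nct] rab rbc; apply/setDP; split.
  exact: cvx rab rbc.
apply/negP => bt; move/negP: nat; apply; rewrite inE aW; apply/forallP => y.
by apply/implyP => yW; exact: reach_trans rab (top_reach bt yW).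
Qed.

Lemma convex_bot W : convex W -> convex (W :\: bot W).
Proof.
move=> cvx a b c /setDP[aW nab] /setDP[cW ncb] rab rbc; apply/setDP; split.
  exact: cvx rab rbc.
apply/negP => bb; move/negP: ncb; apply; rewrite inE cW; apply/forallP => y.
by apply/implyP => yW; exact: reach_trans (bot_reach bb yW) rbc.
Qed.

Lemma top_bot W y : y \in top W -> y \in bot W -> W \subset bot W.
Proof.
move=> yt yb; apply/subsetP => x xW; rewrite inE xW; apply/forallP => z.
by apply/implyP => zW; exact: reach_trans (bot_reach yb zW) (top_reach yt xW).
Qed.

Lemma bot_topD W : ~~ (W \subset bot W) -> bot (W :\: top W) = bot W.
Proof.
move=> nsub; apply/setP => z; apply/idP/idP.
  rewrite inE => /andP[/setDP[zW nzt] /forallP H]; rewrite inE zW; apply/forallP => y.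
  apply/implyP => yW; case: (boolP (y \in top W)) => yt; first exact: top_reach yt zW.
  by have /implyP := H y; apply; apply/setDP.
move=> zb; rewrite inE; apply/andP; split.
  apply/setDP; split; first exact: botW zb.
  by apply/negP => zt; move/negP: nsub; apply; exact: top_bot zt zb.
apply/forallP => y; apply/implyP => /setDP[yW _]; exact: bot_reach zb yW.
Qed.

Lemma lemR m V (C : bool) : #|V| < m -> convex V ->
  (forall v, v \in V :\: bot V -> side v = C) ->
  (exists2 z, z \in bot V & side z != C) ->
  #|V :\: bot V| + #|bot V :&: [set x | side x == C]| <= #|Nset V|.
Proof.
elim: m V => [|m IH] V //; rewrite ltnS => Vm cvx HC [z zb szC].
have bpz := bos_bot zb.
case: (boolP (V \subset bot V)) => [sub|nsub].
  have -> : V :\: bot V = set0 by apply/eqP; rewrite setD_eq0.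
  rewrite cards0 add0n.
  apply: leq_trans (leq_addl _ _) (G1t cvx bpz _ _).
    apply/subsetP => x /setIP[xb _]; rewrite inE (botW xb); apply/forallP => y.
    by apply/implyP => /(subsetP sub) yb; exact: bot_reach yb (botW xb).
  by move=> x /setIP[_]; rewrite inE => /eqP->; rewrite eq_sym.
have [x0 x0V] : exists x, x \in V :\: bot V.
  by move: nsub => /subsetPn[x xV nxb]; exists x; apply/setDP.
have topsub : top V \subset V :\: bot V.
  apply/subsetP => y yt; apply/setDP; split; first exact: topW yt.
  by apply/negP => yb; move/negP: nsub; apply; exact: top_bot yt yb.
have sd : forall x, x \in top V -> side x != side z.
  by move=> x xt; rewrite (HC x (subsetP topsub _ xt)) eq_sym.
have G := G1t cvx bpz (subxx (top V)) sd.
have bV : bot (V :\: top V) = bot V := bot_topD nsub.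
have [y0 y0t] := top_ex (setDP x0V).1.
have Vlt : #|V :\: top V| < m.
  apply: leq_trans Vm; apply: proper_card; apply/properP; split; first exact: subsetDl.
  by exists y0; [exact: topW y0t | rewrite in_setD y0t].
have IH' := IH (V :\: top V) Vlt (convex_top cvx).
rewrite bV in IH'.
have := IH' _ (ex_intro2 _ _ z zb szC).
have HC' : forall v, v \in V :\: top V :\: bot V -> side v = C.
  by move=> v; rewrite !in_setD => /and3P[vb vt vV]; apply: HC; rewrite in_setD vb vV.
move=> /(_ HC') H.
have -> : #|V :\: bot V| = #|V :\: top V :\: bot V| + #|top V|.
  rewrite -(cardsID (top V) (V :\: bot V)) (setIidPr topsub) addnC; congr (_ + _).
  by apply: eq_card => x; rewrite !in_setD andbCA.
rewrite addnAC; apply: leq_trans G; by rewrite leq_add2r.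
Qed.

End Main.


Section Inv.
Variable n : nat.
Implicit Types (f k : ptrans n) (x y : 'I_n) (W : {set 'I_n}).

Definition pinv f : ptrans n := [ffun y => [pick x | f x == Some y]].

Lemma opt_ext (u v : ptrans n) : (forall x y, (u x == Some y) = (v x == Some y)) -> u = v.
Proof.
move=> H; apply/ffunP => x; case Eu: (u x) => [y|]; case Ev: (v x) => [z|] //.
- by have := H x y; rewrite Eu Ev eqxx => /esym/eqP[->].
- by have := H x y; rewrite Eu Ev eqxx.
- by have := H x z; rewrite Eu Ev eqxx.
Qed.

Lemma pinvE f x y : pinj f -> (pinv f y == Some x) = (f x == Some y).
Proof.
move=> If; rewrite ffunE; case: pickP => [x' /eqP fx'|none].
  apply/eqP/eqP => [[<-] //|fx]; by rewrite (If _ _ _ fx' fx).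
by have := none x; rewrite /= => ->.
Qed.

Lemma pinv_inj f : pinj (pinv f).
Proof.
move=> y y' x; rewrite !ffunE; case: pickP => // x1 /eqP f1 [<-].
by case: pickP => // x2 /eqP f2 [E]; move: f1; rewrite -E f2 => -[].
Qed.

Lemma pinvK f : pinj f -> pinv (pinv f) = f.
Proof. by move=> If; apply: opt_ext => x y; rewrite pinvE ?pinvE //; exact: pinv_inj. Qed.

Lemma pinv_comp f k : pinj f -> pinj k -> pinv (pcm f k) = pcm (pinv k) (pinv f).
Proof.
move=> If Ik; apply: opt_ext => z x; rewrite pinvE ?pcompE; last exact: pinj_comp.
apply/idP/idP.
  case Ex: (f x) => [y|]; last by [].
  move=> /eqP /= kyz.
  have -> : pinv k z = Some y by apply/eqP; rewrite pinvE // kyz.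
  by rewrite /= pinvE // Ex.
case Ez: (pinv k z) => [y|]; last by [].
move=> /eqP /= fyx; move/eqP: Ez; rewrite pinvE // => /eqP kyz.
by move/eqP: fyx; rewrite pinvE // => /eqP ->; rewrite /= kyz.
Qed.

Lemma pinv_restrict W f : pinj f -> pinv (restrict W f) = restrict W (pinv f).
Proof.
move=> If; apply: opt_ext => y x.
have Ir : pinj (restrict W f).
  by move=> a b c /restrictS[_ _ E1] /restrictS[_ _ E2]; exact: If E1 E2.
rewrite pinvE //; apply/idP/idP.
  move/eqP/restrictS => [xW yW fx]; rewrite restrictE yW.
  have -> : pinv f y = Some x by apply/eqP; rewrite pinvE // fx.
  by rewrite xW.
move/eqP/restrictS => [yW xW]; move/eqP; rewrite pinvE // => /eqP fx.
by rewrite restrictE xW fx yW.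
Qed.

Lemma pinv0 : pinv (pzero n) = pzero n.
Proof. by apply/ffunP => y; rewrite !ffunE; case: pickP => // x; rewrite ffunE. Qed.

Lemma pinv_pid f : (forall x y, f x = Some y -> y = x) -> pinv f = f.
Proof.
move=> H; have If : pinj f by move=> a b c E1 E2; rewrite -(H _ _ E1) -(H _ _ E2).
apply: opt_ext => y x; rewrite pinvE //.
apply/eqP/eqP => E; have := H _ _ E => e; subst; by [].
Qed.

End Inv.


Record Hyps n (S : {set ptrans n}) (g h : ptrans n) : Prop := MkHyps {
  h_inj : forall f, f \in S -> pinj f;
  h_cl : forall f k, f \in S -> k \in S -> pcm f k \in S;
  h_gS : g \in S;
  h_hS : h \in S;
  h_gid : forall x y, g x = Some y -> y = x;
  h_hid : forall x y, h x = Some y -> y = x;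
  h_part : forall x, (g x == None) = (h x != None);
  h_idem : forall f, f \in S -> pcm f f = f -> f != pzero n -> f = g \/ f = h;
  h_st : semitransitive S }.


Section Transfer.
Variables (n : nat) (S : {set ptrans n}) (g h : ptrans n).
Hypothesis H : Hyps S g h.
Implicit Types (x y : 'I_n) (W V : {set 'I_n}).

Local Notation S' := ((@pinv n) @: S).

Lemma inS' f : f \in S' -> exists2 k, k \in S & f = pinv k.
Proof. by move/imsetP. Qed.

Lemma HypsInv : Hyps S' g h.
Proof.
have gI : pinv g = g := pinv_pid (h_gid H).
have hI : pinv h = h := pinv_pid (h_hid H).
split; try exact: (h_gid H); try exact: (h_hid H); try exact: (h_part H).
- by move=> f /inS'[k _ ->]; exact: pinv_inj.
- move=> f k /inS'[a aS ->] /inS'[b bS ->].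
  rewrite -pinv_comp; try exact: (h_inj H).
  by apply: imset_f; exact: (h_cl H).
- by rewrite -gI; apply: imset_f; exact: (h_gS H).
- by rewrite -hI; apply: imset_f; exact: (h_hS H).
- move=> f /inS'[a aS ->] E nz.
  have Ia := h_inj H aS.
  have Iaa : pinj (pcm a a) by exact: pinj_comp.
  have E' : pcm a a = a.
    have E2 : pinv (pcm a a) = pinv a by rewrite pinv_comp.
    by rewrite -(pinvK Iaa) E2 pinvK.
  have nz' : a != pzero n by apply: contraNneq nz => ->; rewrite pinv0.
  by case: (h_idem H aS E' nz') => ->; [left|right].
- move=> x y; have [f fS [E|E]] := h_st H y x.
    exists (pinv f); first exact: imset_f.
    by left; apply/eqP; rewrite pinvE //; [rewrite E | exact: (h_inj H)].
  exists (pinv f); first exact: imset_f.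
  by right; apply/eqP; rewrite pinvE //; [rewrite E | exact: (h_inj H)].
Qed.

Lemma reach_inv x y : reachb S' x y = reachb S y x.
Proof.
apply/existsP/existsP => [[f /andP[/inS'[k kS ->] E]]|[f /andP[fS E]]].
  by exists k; rewrite kS /= -pinvE //; exact: (h_inj H).
by exists (pinv f); rewrite imset_f //= pinvE //; exact: (h_inj H).
Qed.

Lemma top_inv W : top S' W = bot S W.
Proof. by apply/setP => x; rewrite !inE; congr (_ && _); apply: eq_forallb => y; rewrite reach_inv. Qed.

Lemma bot_inv W : bot S' W = top S W.
Proof. by apply/setP => x; rewrite !inE; congr (_ && _); apply: eq_forallb => y; rewrite reach_inv. Qed.

Lemma convex_inv W : convex S W -> convex S' W.
Proof. by move=> cvx a b c aW cW; rewrite !reach_inv => rba rcb; exact: cvx cW aW rcb rba. Qed.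

Lemma N0_inv : N0 S' g h = (@pinv n) @: N0 S g h.
Proof.
have gI : pinv g = g := pinv_pid (h_gid H).
have hI : pinv h = h := pinv_pid (h_hid H).
have Ig : pinj g by move=> a b c E1 E2; rewrite -(h_gid H E1) -(h_gid H E2).
have Ih : pinj h by move=> a b c E1 E2; rewrite -(h_hid H E1) -(h_hid H E2).
have key e f s : pinj e -> pinj f -> pinv e = e -> pinv f = f -> s \in S ->
    pcm (pcm e (pinv s)) f = pinv (pcm (pcm f s) e).
  move=> Ie If eI fI sS; have Is := h_inj H sS.
  by rewrite pinv_comp ?pinv_comp ?eI ?fI ?pcompA //; apply: pinj_comp.
rewrite /N0 imsetU setUC; congr (_ :|: _); apply/setP => f; apply/imsetP/imsetP.
- by move=> [s' /inS'[s sS ->] ->]; exists (pcm (pcm g s) h); [apply: imset_f | exact: key].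
- move=> [k /imsetP[s sS ->] ->]; exists (pinv s); first exact: imset_f.
  by rewrite key.
- by move=> [s' /inS'[s sS ->] ->]; exists (pcm (pcm h s) g); [apply: imset_f | exact: key].
- move=> [k /imsetP[s sS ->] ->]; exists (pinv s); first exact: imset_f.
  by rewrite key.
Qed.

Lemma Nset_inv W : #|Nset S' g h W| = #|Nset S g h W|.
Proof.
set R := [set restrict W k | k in N0 S g h].
have RI : forall k, k \in R -> pinj k.
  move=> k /imsetP[f fN ->] a b c /restrictS[_ _ E1] /restrictS[_ _ E2].
  by apply: (N0_inj (h_inj H) (h_cl H) (h_gS H) (h_hS H) (h_gid H) (h_hid H) (h_part H) (h_idem H) (h_st H) fN E1 E2).
have E1 : [set restrict W f | f in N0 S' g h] = (@pinv n) @: R.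
  rewrite N0_inv -imset_comp /R -imset_comp; apply: eq_in_imset => k kN /=.
  rewrite pinv_restrict //.
  exact: (N0_inj (h_inj H) (h_cl H) (h_gS H) (h_hS H) (h_gid H) (h_hid H) (h_part H) (h_idem H) (h_st H) kN).
have E2 : (@pinv n) @: R :\ pzero n = (@pinv n) @: (R :\ pzero n).
  apply/setP => f; apply/idP/idP.
    case/setD1P => nz /imsetP[k kR Ef]; subst f; apply: imset_f; apply/setD1P; split => //.
    by apply/eqP => E; move: nz; rewrite E pinv0 eqxx.
  case/imsetP => k /setD1P[nz kR] ->; apply/setD1P; split; last exact: imset_f.
  apply/eqP => E; move: nz; by rewrite -(pinvK (RI k kR)) E pinv0 eqxx.
rewrite /Nset E1 E2 card_in_imset //.
move=> a b /setD1P[_ aR] /setD1P[_ bR] E.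
by rewrite -(pinvK (RI a aR)) E pinvK //; exact: RI.
Qed.

End Transfer.


Section Use.
Variables (n : nat) (S : {set ptrans n}) (g h : ptrans n).
Hypothesis H : Hyps S g h.
Let H' := HypsInv H.
Implicit Types (x y z : 'I_n) (W V : {set 'I_n}).
Local Notation S' := ((@pinv n) @: S).
Let i1 := h_inj H. Let i2 := h_cl H. Let i3 := h_gS H. Let i4 := h_hS H.
Let i5 := h_gid H. Let i6 := h_hid H. Let i7 := h_part H. Let i8 := h_idem H. Let i9 := h_st H.
Let j1 := h_inj H'. Let j2 := h_cl H'. Let j3 := h_gS H'. Let j4 := h_hS H'.
Let j5 := h_gid H'. Let j6 := h_hid H'. Let j7 := h_part H'. Let j8 := h_idem H'. Let j9 := h_st H'.

Local Notation reach := (reachb S).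
Local Notation top := (top S).
Local Notation bot := (bot S).
Local Notation convex := (convex S).
Local Notation Nset := (Nset S g h).
Local Notation side := (side g).

Lemma Hrefl x : reach x x. Proof. exact: (reach_refl i1 i2 i3 i4 i5 i6 i7 i8 i9). Qed.
Lemma Htrans x y z : reach x y -> reach y z -> reach x z.
Proof. exact: (reach_trans i1 i2 i3 i4 i5 i6 i7 i8 i9). Qed.
Lemma Htop_ex W x : x \in W -> exists y, y \in top W.
Proof. exact: (top_ex i1 i2 i3 i4 i5 i6 i7 i8 i9). Qed.
Lemma Hbot_ex W x : x \in W -> exists y, y \in bot W.
Proof. exact: (bot_ex i1 i2 i3 i4 i5 i6 i7 i8 i9). Qed.
Lemma HtopW W x : x \in top W -> x \in W. Proof. exact: (topW i1 i2 i3 i4 i5 i6 i7 i8 i9). Qed.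
Lemma HbotW W x : x \in bot W -> x \in W. Proof. exact: (botW i1 i2 i3 i4 i5 i6 i7 i8 i9). Qed.
Lemma Htop_reach W x y : x \in top W -> y \in W -> reach x y.
Proof. exact: (top_reach i1 i2 i3 i4 i5 i6 i7 i8 i9). Qed.
Lemma Hbot_reach W y z : z \in bot W -> y \in W -> reach y z.
Proof. exact: (bot_reach i1 i2 i3 i4 i5 i6 i7 i8 i9). Qed.
Lemma Hconvex_top W : convex W -> convex (W :\: top W).
Proof. exact: (convex_top i1 i2 i3 i4 i5 i6 i7 i8 i9). Qed.
Lemma Hconvex_bot W : convex W -> convex (W :\: bot W).
Proof. exact: (convex_bot i1 i2 i3 i4 i5 i6 i7 i8 i9). Qed.
Lemma Hbot_topD W : ~~ (W \subset bot W) -> bot (W :\: top W) = bot W.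
Proof. exact: (bot_topD i1 i2 i3 i4 i5 i6 i7 i8 i9). Qed.

Lemma HG1 W : convex W -> (exists2 a, a \in W & side a) -> (exists2 b, b \in W & ~~ side b) ->
  #|Nset (W :\: top W)| + #|top W| <= #|Nset W|.
Proof. exact: (G1 i1 i2 i3 i4 i5 i6 i7 i8 i9). Qed.

Lemma HG2 W : convex W -> (exists2 a, a \in W & side a) -> (exists2 b, b \in W & ~~ side b) ->
  #|Nset (W :\: bot W)| + #|bot W| <= #|Nset W|.
Proof.
move=> cvx sa sb.
have := G1 j1 j2 j3 j4 j5 j6 j7 j8 j9 (convex_inv H cvx) sa sb.
by rewrite (top_inv H) !(Nset_inv H).
Qed.

Lemma HG1r W x (P : {set 'I_n}) : convex W -> x \in top W ->
  (forall p, p \in P -> p \in bot W /\ side p != side x) ->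
  #|Nset (W :\: top W)| + #|P| <= #|Nset W|.
Proof.
move=> cvx xt HP; apply: (G1r i1 i2 i3 i4 i5 i6 i7 i8 i9 cvx xt) => p pP.
have [pb sp] := HP p pP; split => //.
exact: (bos_bot i1 i2 i3 i4 i5 i6 i7 i8 i9).
Qed.

Lemma HG2r W x (P : {set 'I_n}) : convex W -> x \in bot W ->
  (forall p, p \in P -> p \in top W /\ side p != side x) ->
  #|Nset (W :\: bot W)| + #|P| <= #|Nset W|.
Proof.
move=> cvx xb HP.
have := G1r j1 j2 j3 j4 j5 j6 j7 j8 j9 (convex_inv H cvx) (x := x) (P := P).
rewrite (top_inv H) !(Nset_inv H) //; apply => // p pP.
have [pt sp] := HP p pP; split => //; split; first exact: HtopW pt.
by move=> q qW _ _; rewrite (reach_inv H); exact: Htop_reach pt qW.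
Qed.

Lemma HR V (C : bool) : convex V ->
  (forall v, v \in V :\: bot V -> side v = C) ->
  (exists2 z, z \in bot V & side z != C) ->
  #|V :\: bot V| + #|bot V :&: [set x | side x == C]| <= #|Nset V|.
Proof. exact: (lemR i1 i2 i3 i4 i5 i6 i7 i8 i9 (ltnSn _)). Qed.

Lemma HR' V (C : bool) : convex V ->
  (forall v, v \in V :\: top V -> side v = C) ->
  (exists2 z, z \in top V & side z != C) ->
  #|V :\: top V| + #|top V :&: [set x | side x == C]| <= #|Nset V|.
Proof.
move=> cvx HC Hz.
have := lemR j1 j2 j3 j4 j5 j6 j7 j8 j9 (ltnSn #|V|) (convex_inv H cvx) (C := C).
by rewrite (bot_inv H) (Nset_inv H); apply.
Qed.

Lemma Htop_botD W : ~~ (W \subset top W) -> top (W :\: bot W) = top W.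
Proof.
move=> nsub; have := bot_topD j1 j2 j3 j4 j5 j6 j7 j8 j9 (W := W).
by rewrite !(bot_inv H) !(top_inv H); apply.
Qed.

Lemma Htop_bot W y : y \in top W -> y \in bot W -> forall w, w \in W -> reach w y && reach y w.
Proof. by move=> yt yb w wW; rewrite (Hbot_reach yb wW) (Htop_reach yt wW). Qed.

Definition twos W := [exists a, (a \in W) && side a] && [exists b, (b \in W) && ~~ side b].

Lemma onesided V x : x \in V -> ~~ twos V -> forall v, v \in V -> side v = side x.
Proof.
move=> xV nt v vV; move: nt; rewrite /twos negb_and => /orP[] /existsPn H1.
  by have := H1 v; have := H1 x; rewrite xV vV /=; case: (side v); case: (side x).
by have := H1 v; have := H1 x; rewrite xV vV /=; case: (side v); case: (side x).
Qed.

Lemma twosP W : twos W -> (exists2 a, a \in W & side a) /\ (exists2 b, b \in W & ~~ side b).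
Proof. by case/andP => /existsP[a /andP[aW sa]] /existsP[b /andP[bW sb]]; split; [exists a|exists b]. Qed.

Variable x0 : 'I_n.
Local Notation K := (tblock S x0).

Lemma x0K : x0 \in K. Proof. by rewrite inE Hrefl. Qed.

Lemma topK W y : K \subset W -> y \in top W -> y \in K -> top W = K.
Proof.
move=> KW yt; rewrite inE => /andP[r0y ry0]; apply/setP => w; apply/idP/idP.
  move=> wt; rewrite inE (Htrans r0y (Htop_reach yt (HtopW wt))).
  by rewrite (Htrans (Htop_reach wt (HtopW yt)) ry0).
rewrite inE => /andP[r0w rw0]; have wK : w \in K by rewrite inE r0w rw0.
rewrite inE (subsetP KW w wK).
apply/forallP => v; apply/implyP => vW; exact: Htrans rw0 (Htrans r0y (Htop_reach yt vW)).
Qed.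

Lemma botK W y : K \subset W -> y \in bot W -> y \in K -> bot W = K.
Proof.
move=> KW yb; rewrite inE => /andP[r0y ry0]; apply/setP => w; apply/idP/idP.
  move=> wb; rewrite inE (Htrans (Hbot_reach yb (HbotW wb)) ry0).
  by rewrite (Htrans r0y (Hbot_reach wb (HbotW yb))).
rewrite inE => /andP[r0w rw0]; have wK : w \in K by rewrite inE r0w rw0.
rewrite inE (subsetP KW w wK).
apply/forallP => v; apply/implyP => vW; exact: Htrans (Htrans (Hbot_reach yb vW) ry0) r0w.
Qed.

Lemma oneK W y : K \subset W -> y \in top W -> y \in bot W -> W = K.
Proof.
move=> KW yt yb; apply/setP => w; apply/idP/idP => [wW|/(subsetP KW)//].
have x0W := subsetP KW _ x0K.
have /andP[rwy ryw] := Htop_bot yt yb wW.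
have /andP[r0y ry0] := Htop_bot yt yb x0W.
by rewrite inE (Htrans r0y ryw) (Htrans rwy ry0).
Qed.

Lemma cardD_sub (A B : {set 'I_n}) : B \subset A -> #|A| = #|A :\: B| + #|B|.
Proof. by move=> sub; rewrite -(cardsID B A) (setIidPr sub) addnC. Qed.

Lemma arith1 a b c d e : a <= c + e -> c + d <= b -> a + d <= b + e.
Proof. move=> /leP H1 /leP H2; apply/leP; rewrite -!plusE in H1 H2 *; lia. Qed.

Lemma arith2 w v vb bc p k nv nw :
  w = v + k -> v = vb + (bc + p) -> vb + bc <= nv -> nv + p <= nw -> w <= nw + k.
Proof.
move=> -> -> /leP H1 /leP H2; apply/leP; rewrite -!plusE in H1 H2 *; lia.
Qed.

Lemma sub_disj (A B C : {set 'I_n}) : C \subset A -> [disjoint B & C] -> C \subset A :\: B.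
Proof.
move=> CA dis; apply/subsetP => v vC; rewrite in_setD (subsetP CA _ vC) andbT.
by rewrite (disjointFl dis vC).
Qed.

Lemma not_disj (A : {set 'I_n}) : ~~ [disjoint A & K] -> exists2 v, v \in A & v \in K.
Proof. by case/pred0Pn => v /andP[vA vK]; exists v. Qed.

Lemma main m W : #|W| < m -> convex W -> K \subset W -> (W = K \/ twos W) ->
  #|W| <= #|Nset W| + #|K|.
Proof.
elim: m W => [|m IH] W //; rewrite ltnS => Wm cvx KW [->|tw]; first by rewrite leq_addl.
case: (boolP (W == K)) => [/eqP->|nWK]; first by rewrite leq_addl.
have x0W := subsetP KW _ x0K.
have [[a aW sa] [b bW sb]] := twosP tw.
have [y yt] := Htop_ex x0W.
have [z zb] := Hbot_ex x0W.
have topsub : top W \subset W by apply/subsetP => v; exact: HtopW.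
have botsub : bot W \subset W by apply/subsetP => v; exact: HbotW.
have ltT : #|W :\: top W| < m.
  apply: leq_trans Wm; apply: proper_card; apply/properP; split; first exact: subsetDl.
  by exists y; [exact: HtopW | rewrite in_setD yt].
have ltB : #|W :\: bot W| < m.
  apply: leq_trans Wm; apply: proper_card; apply/properP; split; first exact: subsetDl.
  by exists z; [exact: HbotW | rewrite in_setD zb].
have noTB : forall v, v \in top W -> v \in bot W -> False.
  by move=> v vt vb; move/eqP: nWK; apply; exact: oneK vt vb.
case: (boolP ([disjoint top W & K] && ((W :\: top W == K) || twos (W :\: top W)))).
  case/andP => dis H2.
  have KW' := sub_disj KW dis.
  have H3 : W :\: top W = K \/ twos (W :\: top W) by case/orP: H2 => [/eqP->|]; [left|right].
  have IH' := IH _ ltT (Hconvex_top cvx) KW' H3.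
  have G := HG1 cvx (ex_intro2 _ _ a aW sa) (ex_intro2 _ _ b bW sb).
  by rewrite (cardD_sub topsub); exact: arith1 IH' G.
move=> nA.
case: (boolP ([disjoint bot W & K] && ((W :\: bot W == K) || twos (W :\: bot W)))).
  case/andP => dis H2.
  have KW' := sub_disj KW dis.
  have H3 : W :\: bot W = K \/ twos (W :\: bot W) by case/orP: H2 => [/eqP->|]; [left|right].
  have IH' := IH _ ltB (Hconvex_bot cvx) KW' H3.
  have G := HG2 cvx (ex_intro2 _ _ a aW sa) (ex_intro2 _ _ b bW sb).
  by rewrite (cardD_sub botsub); exact: arith1 IH' G.
move=> nB.
have sab : forall C : bool, exists2 c, c \in W & side c != C.
  by case; [exists b => //; case: (side b) sb | exists a => //; case: (side a) sa].
case: (boolP [disjoint top W & K]) => dT; last first.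
  have [k kt kK] := not_disj dT.
  have eT : top W = K := topK KW kt kK.
  have dB : [disjoint bot W & K].
    apply/pred0P => v /=; apply/negP => /andP[vb vK]; apply: (noTB v) => //; by rewrite eT.
  have ntB : ~~ twos (W :\: bot W) by move: nB; rewrite dB /= negb_or => /andP[_].
  have x0B : x0 \in W :\: bot W := subsetP (sub_disj KW dB) _ x0K.
  set C := side x0.
  have one := onesided x0B ntB.
  set P := bot W :&: [set p | side p != C].
  have x0T : x0 \in top W by rewrite eT x0K.
  have HP : forall p, p \in P -> p \in bot W /\ side p != side x0.
    by move=> p /setIP[pb]; rewrite inE => sp; split.
  have G := HG1r cvx x0T HP.
  rewrite eT in G.
  have nWB : ~~ (W \subset bot W).
    by apply/negP => /subsetP/(_ y (HtopW yt)) yb; exact: noTB yt yb.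
  have eB := Hbot_topD nWB.
  have [c cW scC] := sab C.
  have cb : c \in bot W.
    by apply/negPn/negP => ncb; move: scC; rewrite one ?eqxx //; rewrite in_setD ncb.
  have R := HR (C := C) (Hconvex_top cvx) _ (ex_intro2 _ _ c _ scC).
  rewrite eB in R; have R' := R _ cb; clear R.
  have hyp : forall v, v \in W :\: top W :\: bot W -> side v = C.
    by move=> v; rewrite !in_setD => /and3P[vb _ vW]; apply: one; rewrite in_setD vb vW.
  have := R' hyp; rewrite eT => R2.
  apply: (arith2 (cardD_sub KW) _ R2 G).
  have bWK : bot W \subset W :\: K by apply: sub_disj botsub _; rewrite disjoint_sym.
  rewrite (cardD_sub bWK) -(cardsID [set x | side x == C] (bot W)); congr (_ + (_ + _)).
  by apply: eq_card => v; rewrite /P in_setD in_setI [v \in [set _ | _]]inE [v \in [set _ | _]]inE andbC.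
have ntT : ~~ twos (W :\: top W) by move: nA; rewrite dT /= negb_or => /andP[_].
have x0T : x0 \in W :\: top W := subsetP (sub_disj KW dT) _ x0K.
case: (boolP [disjoint bot W & K]) => dB.
  have ntB : ~~ twos (W :\: bot W) by move: nB; rewrite dB /= negb_or => /andP[_].
  have x0B : x0 \in W :\: bot W := subsetP (sub_disj KW dB) _ x0K.
  have oneT := onesided x0T ntT.
  have oneB := onesided x0B ntB.
  have all : forall w, w \in W -> side w = side x0.
    move=> w wW; case: (boolP (w \in top W)) => wt.
      apply: oneB; rewrite in_setD wW andbT; apply/negP => wb; exact: noTB wt wb.
    by apply: oneT; rewrite in_setD wt wW.
  by move: sa sb; rewrite (all a aW) (all b bW) => ->.
have [k kb kK] := not_disj dB.
have eB : bot W = K := botK KW kb kK.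
set C := side x0.
have one := onesided x0T ntT.
set P := top W :&: [set p | side p != C].
have x0Bt : x0 \in bot W by rewrite eB x0K.
have HP : forall p, p \in P -> p \in top W /\ side p != side x0.
  by move=> p /setIP[pt]; rewrite inE => sp; split.
have G := HG2r cvx x0Bt HP.
rewrite eB in G.
have nWT : ~~ (W \subset top W).
  by apply/negP => /subsetP/(_ z (HbotW zb)) zt; exact: noTB zt zb.
have eT := Htop_botD nWT.
have [c cW scC] := sab C.
have ct : c \in top W.
  by apply/negPn/negP => nct; move: scC; rewrite one ?eqxx //; rewrite in_setD nct.
have R := HR' (C := C) (Hconvex_bot cvx) _ (ex_intro2 _ _ c _ scC).
rewrite eT in R; have R' := R _ ct; clear R.
have hyp : forall v, v \in W :\: bot W :\: top W -> side v = C.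
  by move=> v; rewrite !in_setD => /and3P[vt _ vW]; apply: one; rewrite in_setD vt vW.
have := R' hyp; rewrite eB => R2.
apply: (arith2 (cardD_sub KW) _ R2 G).
have tWK : top W \subset W :\: K by apply: sub_disj topsub _; rewrite disjoint_sym.
rewrite (cardD_sub tWK) -(cardsID [set x | side x == C] (top W)); congr (_ + (_ + _)).
by apply: eq_card => v; rewrite /P in_setD in_setI [v \in [set _ | _]]inE [v \in [set _ | _]]inE andbC.
Qed.

End Use.


Lemma final_hyps (n : nat) (S : {set ptrans n}) (g h : ptrans n) :
  subsemigroup_In_minus_Sn S ->
  semitransitive S ->
  g != h ->
  [set f in S | idempotentb f & f != pzero n] = [set g; h] ->
  Hyps S g h /\ g != pzero n /\ h != pzero n.
Proof.
move=> [HS Hcl] Hst gh Hid.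
have Sinj : forall f, f \in S -> pinj f by move=> f /HS/andP[/pinjP].
have Snp : forall f, f \in S -> ~~ is_permb f by move=> f /HS/andP[].
have gin : g \in [set f in S | idempotentb f & f != pzero n] by rewrite Hid set21.
have hin : h \in [set f in S | idempotentb f & f != pzero n] by rewrite Hid set22.
move: gin hin; rewrite !inE => /and3P[gS /eqP gI gnz] /and3P[hS /eqP hI hnz].
have idem : forall f, f \in S -> pcm f f = f -> f != pzero n -> f = g \/ f = h.
  move=> f fS fI fnz; have : f \in [set f in S | idempotentb f & f != pzero n].
    by rewrite inE fS fnz /idempotentb fI eqxx.
  by rewrite Hid => /set2P.
have pid : forall e, e \in S -> pcm e e = e -> forall x y, e x = Some y -> y = x.
  move=> e eS eI x y exy.
  have eyy : e y = Some y.
    by have := congr1 (fun f : ptrans n => f x) eI; rewrite pcompE exy.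
  exact: (Sinj _ eS _ _ _ eyy exy).
have gid := pid g gS gI. have hid := pid h hS hI.
have ppin : forall f m, f \in S -> ppow f m \in S.
  by move=> f m fS; elim: m => [|m IH] //=; exact: Hcl.
have cover : forall x, (g x != None) || (h x != None).
  move=> x; have [f fS fx] : exists2 f, f \in S & f x = Some x.
    by have [f fS [E|E]] := Hst x x; exists f.
  have [m Em] := ppow_idem f.
  have px : ppow f m x = Some x by elim: m {Em} => [|m IH] //=; rewrite pcompE fx.
  have nz : ppow f m != pzero n by apply/negP => /eqP E; move: px; rewrite E ffunE.
  by case: (idem _ (ppin f m fS) Em nz) => <-; rewrite px ?orbT.
have gP x : g x != None -> g x = Some x.
  by case E: (g x) => [y|] // _; rewrite (gid _ _ E).
have hP x : h x != None -> h x = Some x.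
  by case E: (h x) => [y|] // _; rewrite (hid _ _ E).
have perm : forall e, e \in S -> (forall x, e x != None) -> False.
  move=> e eS tot; have := Snp e eS; rewrite /is_permb.
  by rewrite (introT (pinjP _) (Sinj e eS)) /=; move/forallP; apply.
have disj : forall x, g x != None -> h x != None -> False.
  move=> x gx hx.
  have ghS : pcm g h \in S by exact: Hcl.
  have ghv : forall y, pcm g h y = if (g y != None) && (h y != None) then Some y else None.
    move=> y; rewrite pcompE; case: (boolP (g y != None)) => gy.
      by rewrite (gP _ gy) /=; case: (boolP (h y != None)) => hy; [rewrite (hP _ hy) | move: hy; rewrite negbK => /eqP].
    by move: gy; rewrite negbK => /eqP ->.
  have ghI : pcm g h = pcm (pcm g h) (pcm g h).
    apply/ffunP => y; rewrite [RHS]pcompE !ghv; case: ifP => //= H.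
    by rewrite ghv H.
  have ghnz : pcm g h != pzero n.
    by apply/negP => /eqP E; have := ghv x; rewrite E gx hx ffunE.
  case: (idem _ ghS (esym ghI) ghnz) => E.
    apply: (perm h hS) => y; have := cover y; case: (boolP (g y != None)) => //= gy _.
    by have := ghv y; rewrite E gy /=; case: (h y != None) => //; rewrite (gP _ gy).
  apply: (perm g gS) => y; have := cover y; case: (boolP (h y != None)) => //= hy; rewrite ?orbF // => _.
  by have := ghv y; rewrite E hy andbT; case: (g y != None) => //; rewrite (hP _ hy).
have part : forall x, (g x == None) = (h x != None).
  move=> x; have C := cover x; have D := disj x.
  case Eg: (g x) => [a|]; case Eh: (h x) => [b|] //=.
    by exfalso; apply: D; rewrite ?Eg ?Eh.
  by move: C; rewrite Eg Eh.
split => //; split => //.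
Qed.

Theorem lemma3p3 (n : nat) (S : {set ptrans n}) (g h : ptrans n) (t : nat) :
  2 <= n ->
  subsemigroup_In_minus_Sn S ->
  semitransitive S ->
  #|S| <= 2 * n ->
  g != h ->
  [set f in S | idempotentb f & f != pzero n] = [set g; h] ->
  (exists x : 'I_n, #|tblock S x| = t) ->
  (forall x : 'I_n, t <= #|tblock S x|) ->
  n - t <= #|(sandwich S g h :|: sandwich S h g) :\ pzero n|.
Proof.
move=> _ Hsub Hst _ gh Hid [x0 Ht] _.
have [H [gnz hnz]] := final_hyps Hsub Hst gh Hid.
have cvxT : convex S [set: 'I_n] by move=> a b c _ _ _ _; rewrite in_setT.
have ex_nz : forall e : ptrans n, e != pzero n -> exists a, e a != None.
  move=> e enz; case: (boolP [exists a, e a != None]) => [/existsP[a Ha]|/existsPn Hn].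
    by exists a.
  have E : e = pzero n.
    by apply/ffunP => a; rewrite ffunE; have := Hn a; rewrite negbK => /eqP.
  by rewrite E eqxx in enz.
have tw : twos g [set: 'I_n].
  have [a ga] := ex_nz g gnz; have [b hb] := ex_nz h hnz.
  apply/andP; split; apply/existsP; [exists a | exists b]; rewrite in_setT //=.
  by rewrite /side -(h_part H) negbK in hb *.
have M := main H (x0 := x0) (m := n.+1) (W := [set: 'I_n]).
rewrite cardsT card_ord in M.
have NT : Nset S g h [set: 'I_n] = (sandwich S g h :|: sandwich S h g) :\ pzero n.
  rewrite /Nset; congr (_ :\ _); rewrite -[RHS]imset_id; apply: eq_imset => f.
  by apply/ffunP => x; rewrite restrictE in_setT; case: (f x) => [y|] //; rewrite in_setT.
rewrite -NT -Ht leq_subLR addnC; apply: M => //; last by right.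
Qed.
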